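(* Let $S\subset\mathbb{R}^2$ be a finite point set and $I=\{p_1,\dots,p_n\}$ a finite point set disjoint from $S$, with $S\cup I$ in general position. Let $R\subseteq S$ be any subset containing every $q\in S$ such that some $p_i\in I$ conflicts (with respect to $S$) with $V_q(S)$. Let $U_R$ be the set of Voronoi edge bends and Voronoi vertices of $\mathrm{Vor}_Q(R)$ that conflict (with respect to $R$) with at least one of $p_1,\dots,p_n$, and for each $i$ let $V_S|_{p_i}$ be the set of Voronoi edge bends and Voronoi vertices of $\mathrm{Vor}_Q(S)$ that conflict (with respect to $S$) with $p_i$. Then $U_R\subseteq\bigcup_{i=1}^n V_S|_{p_i}$.
   Context: Let $Q\subset\mathbb{R}^2$ be a convex polygon with a constant number of vertices containing the origin in its interior; $d_Q(x,y)=\min\{\lambda\ge 0: y\in\lambda Q+x\}$; $Q^*=\{-x:x\in Q\}$. For a finite set $Y$ and $p\in Y$, $V_p(Y)=\{x: d_Q(p,x)\le d_Q(q,x)\ \forall q\in Y\}$ and $\mathrm{Vor}_Q(Y)$ is the resulting subdivision. Voronoi edges are polygonal curves; their interior vertices are Voronoi edge bends. For $x\in\mathbb{R}^2$, the largest homothetic copy $\lambda Q^*+x$ ($\lambda\ge0$) of $Q^*$ centered at $x$ whose interior avoids $Y$ is denoted $Q^*_x$ (w.r.t. $Y$); a point $p$ conflicts with $x$ w.r.t. $Y$ if $p\in Q^*_x$, and conflicts with a set if it conflicts with some point of it. General position means: no two sides of $Q$ are parallel; no line through two of the points is parallel to a side of $Q$; no four points lie on the boundary of a homothetic copy of $Q^*$.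 *)

(* Defs.v *)
From Stdlib Require Import Reals List.
From Coquelicot Require Import Rbar Lub.
Open Scope R_scope.

Definition point : Type := (R * R)%type.
Definition padd (a b : point) : point := (fst a + fst b, snd a + snd b).
Definition psub (a b : point) : point := (fst a - fst b, snd a - snd b).
Definition pscale (l : R) (a : point) : point := (l * fst a, l * snd a).
Definition cross (a b : point) : R := fst a * snd b - snd a * fst b.
Definition origin : point := (0, 0).

(* topological interior in R^2 (max-norm balls give the usual topology) *)
Definition interior (A : point -> Prop) (y : point) : Prop :=
  exists eps, 0 < eps /\ forall z : point,
    Rabs (fst z - fst y) < eps -> Rabs (snd z - snd y) < eps -> A z.
Definition boundary (A : point -> Prop) (y : point) : Prop :=
  A y /\ ~ interior A y.

Definition convex (C : point -> Prop) : Prop :=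
  forall a b t, C a -> C b -> 0 <= t <= 1 -> C (padd a (pscale t (psub b a))).
Definition conv (vs : list point) (z : point) : Prop :=
  forall C, convex C -> (forall v, In v vs -> C v) -> C z.

Definition convex_polygon (Q : point -> Prop) : Prop :=
  exists vs : list point, forall z, Q z <-> conv vs z.
Definition good_Q (Q : point -> Prop) : Prop :=
  convex_polygon Q /\ interior Q origin.

Definition homot (Q : point -> Prop) (l : R) (x : point) (y : point) : Prop :=
  exists z, Q z /\ y = padd x (pscale l z).
Definition Qstar (Q : point -> Prop) (z : point) : Prop := Q (pscale (-1) z).

Definition dQ (Q : point -> Prop) (x y : point) : R :=
  real (Glb_Rbar (fun l => 0 <= l /\ homot Q l x y)).

Definition Vcell (Q : point -> Prop) (Y : list point) (p : point) (x : point) : Prop :=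
  forall q, In q Y -> dQ Q p x <= dQ Q q x.

Definition Vor_vertex (Q : point -> Prop) (Y : list point) (x : point) : Prop :=
  exists p1 p2 p3, In p1 Y /\ In p2 Y /\ In p3 Y /\
    p1 <> p2 /\ p1 <> p3 /\ p2 <> p3 /\
    Vcell Q Y p1 x /\ Vcell Q Y p2 x /\ Vcell Q Y p3 x.

Definition in_a_line (A : point -> Prop) : Prop :=
  exists a d : point, d <> origin /\ forall y, A y -> cross d (psub y a) = 0.

(* Voronoi edge bend of Vor_Q(Y): a point x on the Voronoi edge between
   two sites p <> q (x in V_p and V_q but not a Voronoi vertex) at which
   the edge is not locally straight, i.e. an interior vertex of the
   polygonal curve. *)
Definition Vor_bend (Q : point -> Prop) (Y : list point) (x : point) : Prop :=
  exists p q, In p Y /\ In q Y /\ p <> q /\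
    Vcell Q Y p x /\ Vcell Q Y q x /\ ~ Vor_vertex Q Y x /\
    forall eps, 0 < eps ->
      ~ in_a_line (fun y => Vcell Q Y p y /\ Vcell Q Y q y /\
                     Rabs (fst y - fst x) < eps /\ Rabs (snd y - snd x) < eps).

Definition Vor_feature (Q : point -> Prop) (Y : list point) (x : point) : Prop :=
  Vor_bend Q Y x \/ Vor_vertex Q Y x.

Definition avoids (Q : point -> Prop) (Y : list point) (x : point) (l : R) : Prop :=
  0 <= l /\ forall q, In q Y -> ~ interior (homot (Qstar Q) l x) q.
Definition Qstar_scale (Q : point -> Prop) (Y : list point) (x : point) (l : R) : Prop :=
  avoids Q Y x l /\ forall m, avoids Q Y x m -> m <= l.

Definition conflicts (Q : point -> Prop) (Y : list point) (p x : point) : Prop :=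
  exists l, Qstar_scale Q Y x l /\ homot (Qstar Q) l x p.
Definition conflicts_set (Q : point -> Prop) (Y : list point) (p : point)
  (A : point -> Prop) : Prop :=
  exists x, A x /\ conflicts Q Y p x.

(* sides of Q: segments [a,b], a <> b, in Q whose line supports Q *)
Definition side_seg (Q : point -> Prop) (a b : point) : Prop :=
  Q a /\ Q b /\ a <> b /\
  ((forall z, Q z -> 0 <= cross (psub b a) (psub z a)) \/
   (forall z, Q z -> cross (psub b a) (psub z a) <= 0)).

Definition general_position (Q : point -> Prop) (P : list point) : Prop :=
  (* no two (distinct) sides of Q are parallel *)
  (forall a b c d, side_seg Q a b -> side_seg Q c d ->
     cross (psub b a) (psub d c) = 0 -> cross (psub b a) (psub c a) = 0) /\
  (forall p q a b, In p P -> In q P -> p <> q -> side_seg Q a b ->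
     cross (psub q p) (psub b a) <> 0) /\
  (forall p1 p2 p3 p4 x l, In p1 P -> In p2 P -> In p3 P -> In p4 P ->
     NoDup (p1 :: p2 :: p3 :: p4 :: nil) -> 0 <= l ->
     ~ (boundary (homot (Qstar Q) l x) p1 /\ boundary (homot (Qstar Q) l x) p2 /\
        boundary (homot (Qstar Q) l x) p3 /\ boundary (homot (Qstar Q) l x) p4)).

(* Main.v *)
Require Import Defs.
From Stdlib Require Import Reals List Lra Classical.
From Coquelicot Require Import Rbar Lub.
Open Scope R_scope.

Definition QOK (Q : point -> Prop) (e0 : R) : Prop :=
  convex Q /\ 0 < e0 /\ forall z, Rabs (fst z) < e0 -> Rabs (snd z) < e0 -> Q z.

Lemma good_QOK Q : good_Q Q -> exists e0, QOK Q e0.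
Proof.
  intros [[vs Hvs] [eps [Heps Hin]]]. exists eps. split; [|split; auto].
  - intros a b t Ha Hb Ht. apply Hvs. apply Hvs in Ha. apply Hvs in Hb.
    intros C HC Hv. apply HC; [apply Ha|apply Hb|]; auto.
  - intros z H1 H2. apply Hin; simpl; rewrite Rminus_0_r; auto.
Qed.

Lemma QOK_0 Q e0 : QOK Q e0 -> Q origin.
Proof. intros [_ [He Hb]]. apply Hb; simpl; rewrite Rabs_R0; lra. Qed.

Lemma div_unit l l' : 0 <= l -> l <= l' -> 0 < l' -> 0 <= l/l' <= 1.
Proof.
  intros. assert (E: l/l' * l' = l) by (field; lra).
  assert (0 < /l') by (apply Rinv_0_lt_compat; lra).
  unfold Rdiv. split; [apply Rmult_le_pos; lra|]. unfold Rdiv in E. nra.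
Qed.

Lemma abs_div_lt x l e : 0 < l -> Rabs x < l * e -> Rabs (x / l) < e.
Proof.
  intros Hl H. unfold Rdiv. rewrite Rabs_mult, Rabs_inv, (Rabs_pos_eq l) by lra.
  assert (0 < /l) by (apply Rinv_0_lt_compat; lra).
  assert (H2: (l*e - Rabs x) * /l > 0) by (apply Rmult_lt_0_compat; lra).
  replace (l*e - Rabs x) with (l*e - Rabs x) in H2 by ring.
  assert (E: (l*e - Rabs x) * /l = e - Rabs x * / l) by (field; lra). lra.
Qed.

Lemma homot_mono Q e0 (H : QOK Q e0) l l' a b :
  0 <= l -> l <= l' -> homot Q l a b -> homot Q l' a b.
Proof.
  intros H0 H1 [z [Hz ->]].
  destruct (Req_dec l' 0) as [E|E].
  - assert (l = 0) by lra. subst. exists z; auto.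
  - exists (padd origin (pscale (l/l') (psub z origin))). split.
    + pose proof (QOK_0 _ _ H) as H0'. destruct H as [Hc _]. apply Hc; [exact H0'|auto|].
      apply div_unit; lra.
    + destruct z as [z1 z2]; unfold padd, pscale, psub, origin; simpl.
      f_equal; field; auto.
Qed.

Lemma homot_add Q e0 (H : QOK Q e0) l1 l2 a b c :
  0 <= l1 -> 0 <= l2 -> homot Q l1 a b -> homot Q l2 b c -> homot Q (l1+l2) a c.
Proof.
  intros H1 H2 [w1 [Hw1 ->]] [w2 [Hw2 ->]].
  destruct (Req_dec (l1+l2) 0) as [E|E].
  - assert (l1 = 0) by lra. assert (l2 = 0) by lra. subst.
    exists w1; split; auto. destruct a, w1, w2; unfold padd, pscale; simpl; f_equal; ring.
  - exists (padd w1 (pscale (l2/(l1+l2)) (psub w2 w1))). split.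
    + destruct H as [Hc _]. apply Hc; auto. apply div_unit; lra.
    + destruct a, w1, w2; unfold padd, pscale, psub; simpl; f_equal; field; auto.
Qed.

Lemma homot_box Q e0 (H : QOK Q e0) a b l : 0 < l ->
  Rabs (fst b - fst a) + Rabs (snd b - snd a) < l * e0 -> homot Q l a b.
Proof.
  intros Hl Hs. exists ((fst b - fst a)/l, (snd b - snd a)/l). split.
  - destruct H as [_ [He Hb]]. apply Hb; simpl; apply abs_div_lt; auto;
    pose proof (Rabs_pos (fst b - fst a)); pose proof (Rabs_pos (snd b - snd a)); lra.
  - destruct a, b; unfold padd, pscale; simpl; f_equal; field; lra.
Qed.

Lemma dQ_spec Q e0 (H : QOK Q e0) a b :
  0 <= dQ Q a b /\ (forall l, 0 <= l -> homot Q l a b -> dQ Q a b <= l) /\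
  (forall m, dQ Q a b < m -> exists l, 0 <= l /\ l < m /\ homot Q l a b).
Proof.
  unfold dQ. set (E := fun l => 0 <= l /\ homot Q l a b).
  pose proof (Glb_Rbar_correct E) as [Hlb Hgl].
  set (l0 := (Rabs (fst b - fst a) + Rabs (snd b - snd a))/ e0 + 1).
  assert (HE0 : E l0).
  { destruct H as [Hc [He Hb]] eqn:HH.
    pose proof (Rabs_pos (fst b - fst a)); pose proof (Rabs_pos (snd b - snd a)).
    assert (0 <= (Rabs (fst b - fst a) + Rabs (snd b - snd a))/ e0)
      by (unfold Rdiv; apply Rmult_le_pos; [lra|left; apply Rinv_0_lt_compat; lra]).
    split; [unfold l0; lra|]. apply (homot_box Q e0 H); [unfold l0; lra|].
    unfold l0. rewrite Rmult_plus_distr_r.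
    replace ((Rabs (fst b - fst a) + Rabs (snd b - snd a)) / e0 * e0)
      with (Rabs (fst b - fst a) + Rabs (snd b - snd a)) by (field; lra). lra. }
  assert (Hlb0 : is_lb_Rbar E (Finite 0)).
  { intros x [Hx _]. simpl. auto. }
  pose proof (Hgl _ Hlb0) as G0. pose proof (Hlb _ HE0) as G1.
  destruct (Glb_Rbar E) as [g| |] eqn:Eg; simpl in G0, G1; try contradiction.
  simpl. split; [auto|split].
  - intros l Hl Hh. apply (Hlb l). split; auto.
  - intros m Hm. apply NNPP. intro Hn.
    assert (Hlbm : is_lb_Rbar E (Finite m)).
    { intros x [Hx Hhx]. simpl. apply Rnot_lt_le. intro Hxm. apply Hn.
      exists x; auto. }
    pose proof (Hgl _ Hlbm). simpl in H0. lra.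
Qed.

Lemma eps_le u v : (forall eps, 0 < eps -> u <= v + eps) -> u <= v.
Proof. intros H. apply Rnot_lt_le. intro Hl. specialize (H ((u-v)/2)). lra. Qed.

Lemma dQ_ge0 Q e0 (H : QOK Q e0) a b : 0 <= dQ Q a b.
Proof. apply (dQ_spec Q e0 H). Qed.

Lemma dQ_le Q e0 (H : QOK Q e0) a b l : 0 <= l -> homot Q l a b -> dQ Q a b <= l.
Proof. apply (dQ_spec Q e0 H). Qed.

Lemma dQ_tri Q e0 (H : QOK Q e0) a b c : dQ Q a c <= dQ Q a b + dQ Q b c.
Proof.
  apply eps_le. intros eps He.
  destruct (proj2 (proj2 (dQ_spec Q e0 H a b)) (dQ Q a b + eps/2)) as [l1 [H1 [H1' H1'']]]; [lra|].
  destruct (proj2 (proj2 (dQ_spec Q e0 H b c)) (dQ Q b c + eps/2)) as [l2 [H2 [H2' H2'']]]; [lra|].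
  pose proof (dQ_le Q e0 H a c (l1+l2) ltac:(lra) (homot_add Q e0 H l1 l2 a b c H1 H2 H1'' H2'')).
  lra.
Qed.

Lemma dQ_lip Q e0 (H : QOK Q e0) a b :
  dQ Q a b <= (Rabs (fst b - fst a) + Rabs (snd b - snd a)) / e0.
Proof.
  pose proof H as [_ [He _]].
  apply eps_le. intros eps Heps.
  pose proof (Rabs_pos (fst b - fst a)); pose proof (Rabs_pos (snd b - snd a)).
  assert (0 <= (Rabs (fst b - fst a) + Rabs (snd b - snd a))/ e0)
      by (unfold Rdiv; apply Rmult_le_pos; [lra|left; apply Rinv_0_lt_compat; lra]).
  apply dQ_le with (e0 := e0); auto; [lra|].
  apply (homot_box Q e0 H); [lra|].
  rewrite Rmult_plus_distr_r.
  replace ((Rabs (fst b - fst a) + Rabs (snd b - snd a)) / e0 * e0)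
      with (Rabs (fst b - fst a) + Rabs (snd b - snd a)) by (field; lra).
  nra.
Qed.

Lemma homot_star1 Q l y z : homot (Qstar Q) l y z -> homot Q l z y.
Proof.
  intros [w [Hw ->]]. exists (pscale (-1) w). split; auto.
  destruct y, w; unfold padd, pscale; simpl; f_equal; ring.
Qed.

Lemma homot_star2 Q l y z : homot Q l z y -> homot (Qstar Q) l y z.
Proof.
  intros [w [Hw ->]]. exists (pscale (-1) w). split.
  - unfold Qstar. replace (pscale (-1) (pscale (-1) w)) with w; auto.
    destruct w; unfold pscale; simpl; f_equal; ring.
  - destruct z, w; unfold padd, pscale; simpl; f_equal; ring.
Qed.

Lemma int_lt Q e0 (H : QOK Q e0) l y q :
  0 <= l -> Defs.interior (homot (Qstar Q) l y) q -> dQ Q q y < l.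
Proof.
  intros Hl [eps [Heps Hi]].
  destruct (Req_dec l 0) as [E|E].
  - exfalso. subst l.
    assert (A1 : homot (Qstar Q) 0 y q) by (apply Hi; rewrite Rminus_diag, Rabs_R0; lra).
    assert (A2 : homot (Qstar Q) 0 y (fst q + eps/2, snd q)).
    { apply Hi; simpl.
      + replace (fst q + eps/2 - fst q) with (eps/2) by ring. rewrite Rabs_pos_eq; lra.
      + rewrite Rminus_diag, Rabs_R0; lra. }
    destruct A1 as [w1 [_ E1]]. destruct A2 as [w2 [_ E2]].
    destruct q, y, w1, w2; unfold padd, pscale in *; simpl in *.
    injection E1; injection E2; intros; nra.
  - set (D := Rabs (fst y - fst q) + Rabs (snd y - snd q) + 1).
    pose proof (Rabs_pos (fst y - fst q)); pose proof (Rabs_pos (snd y - snd q)).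
    assert (HD : 0 < D) by (unfold D; lra).
    set (d := eps / (2 * D)).
    assert (Hd : 0 < d) by (unfold d; apply Rdiv_lt_0_compat; lra).
    assert (HdD : d * D = eps/2) by (unfold d; field; lra).
    set (z := (fst q - d * (fst y - fst q), snd q - d * (snd y - snd q))).
    assert (Hz : homot (Qstar Q) l y z).
    { apply Hi.
    + unfold z; simpl. replace (fst q - d * (fst y - fst q) - fst q) with (- (d * (fst y - fst q))) by ring.
      rewrite Rabs_Ropp, Rabs_mult, (Rabs_pos_eq d) by lra. unfold D in HdD. nra.
    + unfold z; simpl. replace (snd q - d * (snd y - snd q) - snd q) with (- (d * (snd y - snd q))) by ring.
      rewrite Rabs_Ropp, Rabs_mult, (Rabs_pos_eq d) by lra. unfold D in HdD. nra. }
    apply homot_star1 in Hz. destruct Hz as [w [Hw Ez]].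
    assert (Hh : homot Q (l/(1+d)) q y).
    { exists w; split; auto. unfold z in Ez.
      destruct q as [q1 q2], y as [y1 y2], w as [w1 w2]; unfold padd, pscale in *; simpl in *.
      injection Ez; intros E2 E1.
      assert (F1 : l * w1 = (1+d) * (y1 - q1)) by lra.
      assert (F2 : l * w2 = (1+d) * (y2 - q2)) by lra.
      f_equal.
      + replace (l/(1+d)*w1) with ((l*w1)/(1+d)) by (field; lra). rewrite F1. field; lra.
      + replace (l/(1+d)*w2) with ((l*w2)/(1+d)) by (field; lra). rewrite F2. field; lra. }
    assert (Hp : 0 <= l/(1+d)) by (left; apply Rdiv_lt_0_compat; lra).
    pose proof (dQ_le Q e0 H q y _ Hp Hh).
    assert (l/(1+d) < l).
    { apply Rmult_lt_reg_r with (1+d); [lra|]. unfold Rdiv. rewrite Rmult_assoc, Rinv_l by lra. nra. }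
    lra.
Qed.

Lemma int_gt Q e0 (H : QOK Q e0) m y q :
  dQ Q q y < m -> Defs.interior (homot (Qstar Q) m y) q.
Proof.
  intros Hm.
  destruct (proj2 (proj2 (dQ_spec Q e0 H q y)) m Hm) as [l [Hl [Hlm [w [Hw Ey]]]]].
  pose proof H as [Hc [He Hb]].
  exists (e0 * (m - l)). split; [nra|].
  intros z Hz1 Hz2. apply homot_star2.
  exists (padd w (pscale ((m-l)/m) (psub (pscale (/(m-l)) (psub q z)) w))). split.
  - apply Hc; auto.
    + apply Hb; unfold pscale, psub; simpl.
      * rewrite Rmult_comm. apply abs_div_lt; [lra|]. rewrite Rabs_minus_sym. nra.
      * rewrite Rmult_comm. apply abs_div_lt; [lra|]. rewrite Rabs_minus_sym. nra.
    + apply div_unit; lra.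
  - destruct q as [q1 q2], y as [y1 y2], w as [w1 w2], z as [z1 z2];
      unfold padd, pscale, psub in *; simpl in *.
    injection Ey; intros E2 E1. rewrite E1, E2. f_equal; field; lra.
Qed.

Lemma qs_min Q e0 (H : QOK Q e0) Y y r :
  In r Y -> (forall q, In q Y -> dQ Q r y <= dQ Q q y) -> Qstar_scale Q Y y (dQ Q r y).
Proof.
  intros Hr Hmin. split.
  - split; [apply (dQ_ge0 Q e0 H)|]. intros q Hq Hi.
    pose proof (int_lt Q e0 H _ _ _ (dQ_ge0 Q e0 H r y) Hi). specialize (Hmin q Hq). lra.
  - intros m [Hm Ha]. apply Rnot_lt_le. intro Hlt.
    apply (Ha r Hr). apply (int_gt Q e0 H). auto.
Qed.

Lemma qs_unique Q Y y l l' : Qstar_scale Q Y y l -> Qstar_scale Q Y y l' -> l = l'.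
Proof.
  intros [A1 M1] [A2 M2]. apply Rle_antisym; auto.
Qed.

Lemma argmin (f : point -> R) L : L <> nil ->
  exists r, In r L /\ forall q, In q L -> f r <= f q.
Proof.
  induction L as [|a L IH]; intros Hne; [congruence|].
  destruct L as [|b L'].
  - exists a. split; [left; auto|]. intros q [->|[]]. lra.
  - destruct IH as [r [Hr Hm]]; [discriminate|].
    destruct (Rle_dec (f a) (f r)).
    + exists a. split; [left; auto|]. intros q [->|Hq]; [lra|]. specialize (Hm q Hq). lra.
    + exists r. split; [right; auto|]. intros q [->|Hq]; [lra|]. auto.
Qed.

Lemma margin (f : point -> R) (P : point -> Prop) c L :
  (forall s, In s L -> P s -> c < f s) ->
  exists m, 0 < m /\ forall s, In s L -> P s -> c + m <= f s.
Proof.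
  induction L as [|a L IH]; intros H.
  - exists 1. split; [lra|]. intros s [].
  - destruct IH as [m [Hm Hms]]; [intros s Hs; apply H; right; auto|].
    destruct (classic (P a)) as [Pa|Pa].
    + specialize (H a (or_introl eq_refl) Pa).
      exists (Rmin m (f a - c)). split; [apply Rmin_pos; lra|].
      intros s [<-|Hs] Ps.
      * pose proof (Rmin_r m (f a - c)). lra.
      * pose proof (Rmin_l m (f a - c)). specialize (Hms s Hs Ps). lra.
    + exists m. split; auto. intros s [<-|Hs] Ps; [contradiction|]. auto.
Qed.

Lemma cont (G : R -> Prop) : G 0 ->
  (forall t, 0 <= t <= 1 -> ~ G t -> exists d, 0 < d /\ forall t', t - d < t' <= t -> ~ G t') ->
  (forall t, 0 <= t < 1 -> G t -> exists d, 0 < d /\ forall t', t <= t' <= t + d -> G t') ->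
  G 1.
Proof.
  intros G0 Hl Hr.
  set (A := fun t => 0 <= t <= 1 /\ forall u, 0 <= u <= t -> G u).
  assert (HA0 : A 0).
  { split; [lra|]. intros u Hu. replace u with 0 by lra. auto. }
  destruct (completeness A) as [s [Hub Hlub]].
  { exists 1. intros t [Ht _]. lra. }
  { exists 0. auto. }
  assert (Hs0 : 0 <= s) by (apply Hub; auto).
  assert (Hs1 : s <= 1) by (apply Hlub; intros t [Ht _]; lra).
  assert (Hbelow : forall u, 0 <= u < s -> G u).
  { intros u Hu. apply NNPP. intro Hn.
    assert (s <= u).
    { apply Hlub. intros t [Ht Hg]. apply Rnot_lt_le. intro Hut. apply Hn. apply Hg. lra. }
    lra. }
  assert (Gs : G s).
  { apply NNPP. intro Hn. destruct (Hl s (conj Hs0 Hs1) Hn) as [d [Hd Hd']].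
    destruct (Req_dec s 0) as [E|E]; [rewrite E in Hn; auto|].
    set (u := Rmax 0 (s - d/2)).
    assert (0 <= u) by apply Rmax_l.
    assert (u < s) by (unfold u; apply Rmax_lub_lt; lra).
    assert (s - d < u) by (pose proof (Rmax_r 0 (s - d/2)); unfold u in *; lra).
    apply (Hd' u); [lra|]. apply Hbelow; lra. }
  assert (As : A s).
  { split; [lra|]. intros u Hu. destruct (Req_dec u s) as [->|E]; auto. apply Hbelow.
    split; [lra|]. destruct (proj2 Hu); [auto|contradiction]. }
  destruct (Req_dec s 1) as [E|E].
  - rewrite <- E. auto.
  - assert (Hs1' : s < 1) by (destruct Hs1; [auto|contradiction]).
    destruct (Hr s (conj Hs0 Hs1') Gs) as [d [Hd Hd']].
    set (v := Rmin 1 (s + d)).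
    assert (s < v) by (unfold v; apply Rmin_glb_lt; lra).
    assert (v <= s + d) by apply Rmin_r.
    assert (v <= 1) by apply Rmin_l.
    assert (A v).
    { split; [lra|]. intros u Hu. destruct (Rle_dec u s).
      - apply (proj2 As). lra.
      - apply Hd'. lra. }
    pose proof (Hub v H2). lra.
Qed.


Lemma in_a_line_sub (A B : point -> Prop) : (forall y, A y -> B y) -> in_a_line B -> in_a_line A.
Proof. intros Hs [a [d [Hd Hl]]]. exists a, d. split; auto. Qed.

Theorem mainTheorem6 :
  forall (Q : point -> Prop), good_Q Q ->
  forall (S I : list point),
    (forall p, In p I -> ~ In p S) ->
    general_position Q (S ++ I) ->
  forall (Rs : list point),
    incl Rs S ->
    (forall q, In q S ->
       (exists p, In p I /\ conflicts_set Q S p (Vcell Q S q)) -> In q Rs) ->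
  forall x : point,
    Vor_feature Q Rs x ->
    (exists p, In p I /\ conflicts Q Rs p x) ->
    exists p, In p I /\ Vor_feature Q S x /\ conflicts Q S p x.
Proof.
  intros Q HQ S I _ _ Rs Hincl Hhyp x Hfeat [p [HpI Hconf]].
  destruct (good_QOK Q HQ) as [e0 H].
  pose proof H as [_ [He0 _]].
  assert (HRne : Rs <> nil).
  { destruct Hfeat as [[a [_ [Ha _]]] | [a [_ [_ [Ha _]]]]]; intro E; rewrite E in Ha; auto. }
  destruct (argmin (fun q => dQ Q q x) Rs HRne) as [r0 [Hr0 Hr0min]].
  destruct Hconf as [l [Hqs Hpl]].
  assert (El : l = dQ Q r0 x) by (eapply qs_unique; [exact Hqs| apply (qs_min Q e0 H); auto]).
  assert (Hl0 : 0 <= l) by apply (proj1 (proj1 Hqs)).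
  apply homot_star1 in Hpl.
  set (y := fun t => padd p (pscale t (psub x p))).
  set (K := (Rabs (fst x - fst p) + Rabs (snd x - snd p)) / e0).
  assert (HK : 0 <= K).
  { pose proof (Rabs_pos (fst x - fst p)); pose proof (Rabs_pos (snd x - snd p)).
    unfold K, Rdiv; apply Rmult_le_pos; [lra|left; apply Rinv_0_lt_compat; lra]. }
  assert (Hylip : forall a b, dQ Q (y a) (y b) <= Rabs (b - a) * K).
  { intros a b. eapply Rle_trans; [apply (dQ_lip Q e0 H)|].
    unfold y, K, padd, pscale, psub; simpl.
    replace (fst p + b * (fst x - fst p) - (fst p + a * (fst x - fst p)))
      with ((b - a) * (fst x - fst p)) by ring.
    replace (snd p + b * (snd x - snd p) - (snd p + a * (snd x - snd p)))
      with ((b - a) * (snd x - snd p)) by ring.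
    rewrite !Rabs_mult. right. field. lra. }
  destruct Hpl as [w [Hw Ex]].
  assert (F2 : forall t, 0 <= t -> homot Q (t * l) p (y t)).
  { intros t Ht. exists w. split; auto. unfold y. rewrite Ex.
    destruct p, w; unfold padd, pscale, psub; simpl; f_equal; ring. }
  assert (F1 : forall t, 0 <= t <= 1 -> forall q, In q Rs -> t * l <= dQ Q q (y t)).
  { intros t Ht q Hq.
    assert (Hyx : homot Q ((1 - t) * l) (y t) x).
    { exists w. split; auto. unfold y. rewrite Ex.
      destruct p, w; unfold padd, pscale, psub; simpl; f_equal; ring. }
    assert (0 <= (1-t)*l) by nra.
    pose proof (dQ_le Q e0 H _ _ _ H0 Hyx).
    pose proof (dQ_tri Q e0 H q (y t) x).
    pose proof (Hr0min q Hq). simpl in H3. lra. }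
  assert (Hy1 : y 1 = x).
  { unfold y. destruct p, x; unfold padd, pscale, psub; simpl; f_equal; ring. }
  assert (HSne : S <> nil).
  { intro E. specialize (Hincl r0 Hr0). rewrite E in Hincl. auto. }
  assert (G1 : forall s, In s S -> 1 * l <= dQ Q s (y 1)).
  { apply (cont (fun t => forall s, In s S -> t * l <= dQ Q s (y t))).
    - intros s _. rewrite Rmult_0_l. apply (dQ_ge0 Q e0 H).
    - intros t Ht Hn.
      destruct (classic (exists s, In s S /\ dQ Q s (y t) < t * l)) as [[s [Hs Hlt]]|Hno].
      2:{ exfalso. apply Hn. intros s Hs. apply Rnot_lt_le. intro. apply Hno. eauto. }
      set (mg := t * l - dQ Q s (y t)).
      exists (mg / (2 * (K + l + 1))). split.
      { apply Rdiv_lt_0_compat; unfold mg; lra. }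
      intros t' Ht' HG. specialize (HG s Hs).
      pose proof (dQ_tri Q e0 H s (y t) (y t')).
      pose proof (Hylip t t').
      rewrite Rabs_minus_sym, Rabs_pos_eq in H1 by lra.
      assert (Hd : (t - t') * (K + l + 1) < mg).
      { assert (t - t' < mg / (2 * (K + l + 1))) by lra.
        apply Rmult_lt_compat_r with (r := K + l + 1) in H2; [|lra].
        replace (mg / (2 * (K + l + 1)) * (K + l + 1)) with (mg/2) in H2 by (field; lra).
        assert (0 < mg) by (unfold mg; lra). lra. }
      unfold mg in Hd. nra.
    - intros t0 Ht0 Gt0.
      set (y0 := y t0).
      destruct (argmin (fun q => dQ Q q y0) S HSne) as [r [Hr Hrmin]].
      assert (Hin : forall s, In s S -> dQ Q s y0 <= dQ Q r y0 -> In s Rs).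
      { intros s Hs Hle. apply Hhyp; auto. exists p. split; auto. exists y0. split.
        - intros q Hq. specialize (Hrmin q Hq). simpl in Hrmin. lra.
        - exists (dQ Q r y0). split; [apply (qs_min Q e0 H); auto|].
          apply homot_star2. apply (homot_mono Q e0 H (t0 * l)); [nra| |apply F2; lra].
          apply Gt0; auto. }
      destruct (margin (fun s => dQ Q s y0) (fun s => ~ In s Rs) (dQ Q r y0) S) as [m [Hm Hms]].
      { intros s Hs Hn. apply Rnot_le_lt. intro. apply Hn. apply Hin; auto. }
      assert (HrR : In r Rs) by (apply Hin; auto; lra).
      exists (Rmin (1 - t0) (m / (2 * (K + 1)))). split.
      { apply Rmin_pos; [lra|]. apply Rdiv_lt_0_compat; lra. }
      intros t' Ht' s Hs.
      pose proof (Rmin_l (1 - t0) (m / (2 * (K + 1)))).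
      pose proof (Rmin_r (1 - t0) (m / (2 * (K + 1)))).
      destruct (classic (In s Rs)) as [HsR|HsR]; [apply F1; auto; lra|].
      specialize (Hms s Hs HsR). simpl in Hms.
      pose proof (dQ_tri Q e0 H s (y t') y0).
      pose proof (dQ_tri Q e0 H r y0 (y t')).
      pose proof (F1 t' ltac:(lra) r HrR).
      pose proof (Hylip t' t0). pose proof (Hylip t0 t').
      rewrite Rabs_minus_sym, Rabs_pos_eq in H5 by lra.
      rewrite Rabs_pos_eq in H6 by lra.
      unfold y0 in *.
      assert (Hd : (t' - t0) * (2 * K) < m).
      { assert (t' - t0 <= m / (2 * (K + 1))) by lra.
        apply Rmult_le_compat_r with (r := 2 * (K + 1)) in H7; [|lra].
        replace (m / (2 * (K + 1)) * (2 * (K + 1))) with m in H7 by (field; lra).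
        nra. }
      nra. }
  rewrite Hy1 in G1.
  assert (C : forall s, In s S -> l <= dQ Q s x) by (intros s Hs; specialize (G1 s Hs); lra).
  assert (HqsS : Qstar_scale Q S x l).
  { split.
    - split; auto. intros q Hq Hi. pose proof (int_lt Q e0 H _ _ _ Hl0 Hi). specialize (C q Hq). lra.
    - intros m [Hm Ha]. apply (proj2 Hqs). split; [exact Hm|intros q Hq; apply Ha; auto]. }
  assert (HconfS : conflicts Q S p x).
  { exists l. split; auto. apply homot_star2. exists w; auto. }
  assert (HN : forall s, In s S -> dQ Q s x <= l -> In s Rs).
  { intros s Hs Hle. apply Hhyp; auto. exists p. split; auto. exists x. split; auto.
    intros q Hq. specialize (C q Hq). lra. }
  assert (Hcx : forall q, In q Rs -> Vcell Q Rs q x -> Vcell Q S q x).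
  { intros q Hq Hv s Hs. specialize (Hv r0 Hr0). specialize (C s Hs). lra. }
  assert (HcxS : forall q, In q S -> Vcell Q S q x -> In q Rs /\ Vcell Q Rs q x).
  { intros q Hq Hv. assert (In q Rs).
    { apply HN; auto. specialize (Hv r0 (Hincl r0 Hr0)). lra. }
    split; auto. intros s Hs. apply Hv. auto. }
  assert (Hloc : exists d, 0 < d /\ forall z, Rabs (fst z - fst x) < d -> Rabs (snd z - snd x) < d ->
            forall q, In q Rs -> Vcell Q Rs q z -> Vcell Q S q z).
  { destruct (margin (fun s => dQ Q s x) (fun s => ~ In s Rs) l S) as [m [Hm Hms]].
    { intros s Hs Hn. apply Rnot_le_lt. intro. apply Hn. apply HN; auto. }
    exists (m * e0 / 8). split; [nra|].
    intros z Hz1 Hz2 q Hq Hv s Hs.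
    destruct (classic (In s Rs)) as [HsR|HsR]; [apply Hv; auto|].
    specialize (Hms s Hs HsR). simpl in Hms.
    pose proof (dQ_lip Q e0 H x z). pose proof (dQ_lip Q e0 H z x).
    rewrite (Rabs_minus_sym (fst x)), (Rabs_minus_sym (snd x)) in H1.
    assert (Hb : (Rabs (fst z - fst x) + Rabs (snd z - snd x)) / e0 < m / 4).
    { apply Rmult_lt_reg_r with e0; auto. unfold Rdiv. rewrite Rmult_assoc, Rinv_l by lra.
      replace (m * e0 / 8) with (m * e0 / 8) in Hz1 by ring. lra. }
    pose proof (dQ_tri Q e0 H s z x). pose proof (dQ_tri Q e0 H r0 x z).
    specialize (Hv r0 Hr0). simpl in Hr0min. lra. }
  destruct Hloc as [d [Hd Hloc]].
  exists p. split; auto. split; auto.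
  destruct Hfeat as [Hb | Hv].
  - left. destruct Hb as [a [b [Ha [Hb [Hab [Hva [Hvb [Hnv Hline]]]]]]]].
    exists a, b. split; [auto|split; [auto|split; [auto|]]].
    split; [apply Hcx; auto|]. split; [apply Hcx; auto|]. split.
    + intros [p1 [p2 [p3 [H1 [H2 [H3 [N12 [N13 [N23 [V1 [V2 V3]]]]]]]]]]].
      apply Hnv. destruct (HcxS p1 H1 V1), (HcxS p2 H2 V2), (HcxS p3 H3 V3).
      exists p1, p2, p3. tauto.
    + intros eps Heps Hin. apply (Hline (Rmin eps d)); [apply Rmin_pos; auto|].
      eapply in_a_line_sub; [|exact Hin]. simpl.
      intros z [Vz1 [Vz2 [Hz1 Hz2]]].
      pose proof (Rmin_l eps d). pose proof (Rmin_r eps d).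
      repeat split; try lra; apply (Hloc z); auto; lra.
  - right. destruct Hv as [p1 [p2 [p3 [H1 [H2 [H3 [N12 [N13 [N23 [V1 [V2 V3]]]]]]]]]]].
    exists p1, p2, p3. repeat split; auto; apply Hcx; auto.
Qed.
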